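(* Let $c,o$ be vertices with a directed path from $c$ to $o$. Suppose the open loop $M(s)$ is strictly proper with relative degree $\chi=\deg(ap)-\deg(bq)\ge 1$. Then the relative degree of $T_{co}(s)$ (degree of denominator minus degree of numerator, in lowest terms) is $(\delta_{co}+1)\chi$.
   Context: $\mathcal G$ is a weighted directed graph on $\{1,\dots,N\}$ with adjacency matrix $A=[a_{ij}]$. Here $a_{ij}>0$ if there is an arc from $j$ to $i$ and $a_{ij}=0$ otherwise (no self-loops). The Laplacian is $L=D-A$ with $D=\mathrm{diag}(\sum_j a_{ij})$. A directed path from $u$ to $w$ is a sequence of distinct vertices $u=v_0,\dots,v_\ell=w$ with an arc from $v_k$ to $v_{k+1}$ for each $k$, and $\ell$ is its length. $\delta_{uw}$ is the length of a shortest directed path from $u$ to $w$. $e_i$ is the $i$-th canonical basis vector. Let $a,b,p,q$ be nonzero real polynomials and $M(s)=\frac{b(s)q(s)}{a(s)p(s)}$. The network is $y=M(s)[-Ly+r]$. $T_{co}(s)=e_o^T(I+M(s)L)^{-1}M(s)e_c$ is the transfer function from $r_c$ to $y_o$ with all other inputs zero. *)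

(* Defs.v *)
From HB Require Import structures.
From mathcomp Require Import all_boot all_order all_algebra.
From mathcomp Require Import fraction.
Set Implicit Arguments. Unset Strict Implicit. Unset Printing Implicit Defensive.
Import Order.TTheory GRing.Theory Num.Theory.
Local Open Scope ring_scope.

Section Defs.
Variable R : realFieldType.
Variable N : nat.

Definition ratfun := {fraction {poly R}}.
Definition polyF (p : {poly R}) : ratfun := @FracField.tofrac _ p.

(* Weighted digraph with adjacency matrix A: a_ij > 0 iff arc from j to i,
   a_ij = 0 otherwise (so all entries nonnegative), no self loops. *)
Definition adjacency (A : 'M[R]_N) : Prop :=
  (forall i j : 'I_N, 0 <= A i j) /\ (forall i : 'I_N, A i i = 0).

Definition arc (A : 'M[R]_N) : rel 'I_N := fun u w => 0 < A w u.

Definition laplacian (A : 'M[R]_N) : 'M[R]_N :=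
  \matrix_(i, j) ((i == j)%:R * (\sum_k A i k)) - A.

(* A directed path u = v_0, ..., v_l = w of distinct vertices, of length l:
   the sequence s = [v_1; ...; v_l]. *)
Definition dipath (A : 'M[R]_N) (u w : 'I_N) (l : nat) : Prop :=
  exists s : seq 'I_N,
    [/\ size s = l, path (arc A) u s, last u s = w & uniq (u :: s)].

Definition shortest_dist (A : 'M[R]_N) (u w : 'I_N) (delta : nat) : Prop :=
  dipath A u w delta /\ (forall l, dipath A u w l -> (delta <= l)%N).

Definition openloop (a b p q : {poly R}) : ratfun :=
  polyF (b * q) / polyF (a * p).

Definition transfer (A : 'M[R]_N) (M : ratfun) (c o : 'I_N) : ratfun :=
  ((delta_mx 0 o : 'rV[ratfun]_N)
     *m invmx (1%:M + M *: map_mx (fun x => polyF x%:P) (laplacian A))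
     *m (M *: (delta_mx c 0 : 'cV[ratfun]_N))) 0 0.

Definition relative_degree (f : ratfun) (k : int) : Prop :=
  exists n d : {poly R},
    [/\ n != 0, d != 0, coprimep n d, f = polyF n / polyF d
      & (size d)%:Z - (size n)%:Z = k].

End Defs.

(* Main.v *)
Require Import Defs.
From HB Require Import structures.
From mathcomp Require Import all_boot all_order all_algebra.
From mathcomp Require Import fraction.
From mathcomp Require Import fingroup perm ring lra zify.
Import Order.TTheory GRing.Theory Num.Theory.
Local Open Scope ring_scope.
Set Implicit Arguments. Unset Strict Implicit. Unset Printing Implicit Defensive.
Section DetBound.
Variable R : idomainType.

Lemma det_size_bound m (M : 'M[{poly R}]_m) (D : nat) :
  (forall i j, (size (M i j) <= D.+1)%N) -> (size (\det M) <= (m * D).+1)%N.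
Proof.
move=> HM; apply: leq_trans (size_sum _ _ _) _.
apply/bigmax_leqP => s _; rewrite size_Msign.
apply: leq_trans (size_poly_prod_leq _ _) _.
rewrite card_ord.
set S := (\sum_(i | _) _)%N.
have : (S <= \sum_(i < m) D.+1)%N.
  by apply: leq_sum => i _; apply: HM.
rewrite sum_nat_const card_ord => H.
rewrite mulnS in H; lia.
Qed.
End DetBound.
Section PolyPart.
Variable R : fieldType.
Variable N : nat.
Variable L : 'M[R]_N.
Variables d n : {poly R}.
Hypothesis nn0 : n != 0.
Hypothesis sz : (size n < size d)%N.

Definition Xm : 'M[{poly R}]_N := \matrix_(i,j) (n * (L i j)%:P).
Definition Pm : 'M[{poly R}]_N := \matrix_(i,j) ((i==j)%:R * d + n * (L i j)%:P).

Lemma Pm_eq : Pm = d%:M + Xm.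
Proof. by apply/matrixP => i j; rewrite !mxE mulr_natl. Qed.

Lemma size_nc c : (size (n * c%:P)%R <= size n)%N.
Proof.
apply: leq_trans (size_polyMleq _ _) _.
have := size_polyC_leq1 c; have := size_poly_gt0 n; rewrite nn0 => /= ?; lia.
Qed.

Lemma size_Pm i j : (size (Pm i j) <= size d)%N.
Proof.
rewrite mxE; apply: leq_trans (size_polyD _ _) _; rewrite geq_max.
have := size_nc (L i j); case: (i == j); rewrite ?mul1r ?mul0r ?size_poly0; lia.
Qed.

Lemma size_Pm_off i j : i != j -> (size (Pm i j) <= size n)%N.
Proof. by move=> /negbTE hij; rewrite mxE hij mul0r add0r size_nc. Qed.

Lemma size_Pm_diag i : size (Pm i i) = size d.
Proof. by rewrite mxE eqxx mul1r size_polyDl //; apply: leq_ltn_trans (size_nc _) sz. Qed.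

Lemma size_detP : size (\det Pm) = (N * (size d).-1).+1.
Proof.
have d0 : (0 < size d)%N by lia.
rewrite /determinant (bigD1 (1%g : 'S_N)) //= odd_perm1 expr0 mul1r.
have H1 : size (\prod_i Pm i ((1%g : 'S_N) i)) = (N * (size d).-1).+1.
  rewrite size_prod; last first.
    by move=> i _; rewrite perm1 -size_poly_gt0 size_Pm_diag.
  rewrite (eq_bigr (fun=> size d)); last by move=> i _; rewrite perm1 size_Pm_diag.
  rewrite sum_nat_const !card_ord.
  have -> : size d = (size d).-1.+1 by lia.
  rewrite mulnS; lia.
rewrite size_polyDl H1 //.
apply: leq_ltn_trans (size_sum _ _ _) _.
rewrite ltnS; apply/bigmax_leqP => s s1.
rewrite size_Msign.
apply: leq_trans (size_poly_prod_leq _ _) _.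
rewrite card_ord.
have [i0 Hi0] : exists i0, s i0 != i0.
  case: (pickP (fun i => s i != i)) => [i0 Hi0|H]; first by exists i0.
  have hs : s = 1%g by apply/permP => i; rewrite perm1; apply/eqP/negbFE/H.
  by rewrite hs eqxx in s1.
set S := (\sum_(i | _) _)%N.
have HS : (S + size d <= \sum_(i < N) size d + size n)%N.
  have E2 : (\sum_(i < N) size d = size d + \sum_(i < N | i != i0) size d)%N.
    by rewrite (bigD1 i0).
  rewrite /S (bigD1 i0) //= E2.
  have h1 : (size (Pm i0 (s i0)) <= size n)%N by apply: size_Pm_off; rewrite eq_sym.
  apply: (@leq_trans ((size n + \sum_(i < N | i != i0) size d) + size d)).
    by apply: leq_add => //; apply: leq_add => //; apply: leq_sum => i _; apply: size_Pm.
  set B := (\sum_(i < N | i != i0) size d)%N; set sd := size d; set sn := size n; lia.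
rewrite sum_nat_const card_ord in HS.
have hN : (0 < N)%N := leq_ltn_trans (leq0n _) (ltn_ord i0).
move: HS; have -> : size d = (size d).-1.+1 by lia.
rewrite mulnS; lia.
Qed.


Lemma size_adj i j : (size ((\adj Pm) i j) <= ((N.-1) * (size d).-1).+1)%N.
Proof.
rewrite mxE /cofactor size_Msign; apply: det_size_bound => k l.
rewrite !mxE; have h := size_Pm (lift j k) (lift i l); rewrite mxE in h; apply: leq_trans h _; move: sz; set sd := size d; set sn := size n; lia.
Qed.

Fixpoint Sm K : 'M[{poly R}]_N :=
  if K is K'.+1 then d *: Sm K' + (-Xm)^+K' else 0.

Lemma neumann K :
  d^+K *: \adj Pm = \det Pm *: Sm K + \adj Pm *m (-Xm)^+K.
Proof.
elim: K => [|K IH].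
  by rewrite expr0 scale1r /= scaler0 add0r expr0 mulmx1.
have hQ : d *: \adj Pm = (\det Pm)%:M - \adj Pm *m Xm.
  rewrite -mul_adj_mx Pm_eq mulmxDr mul_mx_scalar; by rewrite addrK.
rewrite exprS -scalerA IH scalerDr scalerA mulrC -scalerA scalemxAl hQ.
rewrite mulmxBl mul_scalar_mx /= scalerDr exprS -mulmxE mulmxA mulmxN mulNmx.
by rewrite addrA.
Qed.

Lemma Xpow k i j : ((-Xm)^+k) i j = (-n)^+k * ((L^+k) i j)%:P.
Proof.
elim: k i j => [|k IH] i j.
  by rewrite !expr0 !mxE mul1r rmorphMn rmorph1.
rewrite !exprS -!mulmxE !mxE (big_morph (@polyC R) (@polyCD R) (@polyC0 R)) mulr_sumr; apply: eq_bigr => l _.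
rewrite IH !mxE polyCM; ring.
Qed.

Lemma Sm_entry K i j :
  (Sm K) i j = \sum_(k < K) d^+(K.-1 - k) * ((-Xm)^+k) i j.
Proof.
elim: K => [|K IH]; first by rewrite big_ord0 mxE.
rewrite /= !mxE IH big_ord_recr /= subnn expr0 mul1r mulr_sumr; congr (_ + _).
apply: eq_bigr => k _; rewrite mulrA -exprS.
have hk := ltn_ord k.
by have -> : (K - k = (K.-1 - k).+1)%N by lia.
Qed.


Lemma size_expS (p : {poly R}) k : p != 0 -> size (p^+k) = ((size p).-1 * k).+1.
Proof.
move=> p0; rewrite -size_exp prednK // size_poly_gt0 expf_neq0 //.
Qed.

Section Key.
Variables (c o : 'I_N) (delta : nat).
Hypothesis Lz : forall k, (k < delta)%N -> (L^+k) o c = 0.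
Hypothesis Lnz : (L^+delta) o c != 0.

Lemma key : (\adj Pm) o c != 0 /\
  (size ((\adj Pm) o c) + delta.+1 * (size d).-1 =
   N * (size d).-1 + delta * (size n).-1 + 1)%N.
Proof.
have hN : (0 < N)%N := leq_ltn_trans (leq0n _) (ltn_ord c).
set Q := \adj Pm.
have E : (d^+delta.+1 *: Q) o c = (\det Pm *: Sm delta.+1 + Q *m (-Xm)^+delta.+1) o c.
  by rewrite /Q neumann.
rewrite [LHS]mxE [RHS]mxE [X in _ = X + _]mxE in E.
have HS : (Sm delta.+1) o c = (-n)^+delta * ((L^+delta) o c)%:P.
  rewrite Sm_entry big_ord_recr /= subnn expr0 mul1r Xpow big1 ?add0r // => k _.
  by rewrite Xpow Lz ?ltn_ord // polyC0 !mulr0.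
have nn : size (-n) = size n by rewrite size_polyN.
have szS : size ((Sm delta.+1) o c) = (delta * (size n).-1).+1.
  rewrite HS size_mul ?expf_neq0 ?oppr_eq0 ?polyC_eq0 // size_polyC Lnz.
  by rewrite size_expS ?oppr_eq0 // nn addn1 /= mulnC.
have szR : (size ((Q *m (-Xm)^+delta.+1) o c) <=
            ((N.-1) * (size d).-1 + delta.+1 * (size n).-1).+1)%N.
  rewrite mxE; apply: leq_trans (size_sum _ _ _) _; apply/bigmax_leqP => j _.
  rewrite Xpow; apply: leq_trans (size_polyMleq _ _) _.
  have h1 := size_adj o j.
  have h2 : (size ((-n)^+delta.+1 * ((L^+delta.+1) j c)%:P)%R <= (delta.+1 * (size n).-1).+1)%N.
    apply: leq_trans (size_polyMleq _ _) _.
    rewrite size_expS ?oppr_eq0 // nn mulnC.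
    rewrite size_polyC; case: (_ != 0) => /=; lia.
  move: h1 h2; rewrite -/Q.
  set a1 := size (Q o j); set a2 := size ((-n)^+delta.+1 * _)%R; set a3 := (N.-1 * _)%N; set a4 := (delta.+1 * _)%N.
  lia.
have szdet := size_detP.
have det0 : \det Pm != 0 by rewrite -size_poly_gt0 szdet.
have S0 : (Sm delta.+1) o c != 0 by rewrite -size_poly_gt0 szS.
have szDS : size (\det Pm * (Sm delta.+1) o c) = (N * (size d).-1 + delta * (size n).-1).+1.
  by rewrite size_mul // szdet szS addSn addnS.
have D1 : (N.-1 * (size d).-1 + (size d).-1 = N * (size d).-1)%N.
  by rewrite -mulSnr prednK.
have E1 : (delta.+1 * (size n).-1 = delta * (size n).-1 + (size n).-1)%N by rewrite mulSn addnC.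
have szRHS : size (\det Pm * (Sm delta.+1) o c + (Q *m (-Xm) ^+ delta.+1) o c) =
   (N * (size d).-1 + delta * (size n).-1).+1.
  rewrite size_polyDl szDS //.
  apply: leq_ltn_trans szR _.
  have sn0 : (0 < size n)%N by rewrite size_poly_gt0.
  move: sz sn0 D1 E1; set sd := size d; set sn := size n.
  set x1 := (N.-1 * _)%N; set x2 := (N * _)%N; set x3 := (delta.+1 * _)%N; set x4 := (delta * _)%N.
  lia.
rewrite -E in szRHS.
have Q0 : Q o c != 0.
  apply/negP => /eqP h; move: szRHS; rewrite h mulr0 size_poly0 //.
split => //.
have d0 : d != 0 by rewrite -size_poly_gt0; move: sz; set sn := size n; lia.
move: szRHS; rewrite size_mul ?expf_neq0 // size_expS //.
set sQ := size (Q o c); set D := (size d).-1; set En := (size n).-1.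
rewrite (mulnC D).
lia.
Qed.
End Key.

End PolyPart.

Section Graph.
Variable R : realFieldType.
Variable N : nat.
Variable A : 'M[R]_N.
Hypothesis adjA : adjacency A.
Variable c : 'I_N.

Local Notation L := (laplacian A).

Definition reach k i := exists s : seq 'I_N,
  [/\ (size s <= k)%N, path (Defs.arc A) c s & last c s = i].

Lemma lap_off i j : i != j -> L i j = - A i j.
Proof. by move=> /negbTE hij; rewrite !mxE hij mul0r sub0r. Qed.

Lemma reach_S k i : reach k i -> reach k.+1 i.
Proof. by case=> s [h1 h2 h3]; exists s; split => //; apply: leqW. Qed.

Lemma reach_arc k i j : reach k j -> 0 < A i j -> reach k.+1 i.
Proof.
case=> s [h1 h2 h3] hA; exists (rcons s i); split.
- by rewrite size_rcons.
- by rewrite rcons_path h2 h3 /Defs.arc.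
- by rewrite last_rcons.
Qed.

Lemma posA i j : A i j != 0 -> 0 < A i j.
Proof. by move=> h; rewrite lt_def h (proj1 adjA). Qed.

Lemma G1 k i : (L^+k) i c != 0 -> reach k i.
Proof.
elim: k i => [|k IH] i.
  rewrite expr0 mxE; case: (eqVneq i c) => [-> _|_]; first by exists [::].
  by rewrite mulr0n eqxx.
rewrite exprS -mulmxE mxE => hs.
case: (pickP (fun j => L i j * (L^+k) j c != 0)) => [j /= hj|hn]; last first.
  by move: hs; rewrite big1 ?eqxx // => j _; apply/eqP/negbFE/hn.
have [h1 h2] : L i j != 0 /\ (L^+k) j c != 0.
  by split; apply/negP => /eqP h; move: hj; rewrite h ?mul0r ?mulr0 eqxx.
have := IH _ h2.
case: (eqVneq j i) => [->|hji]; first exact: reach_S.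
move=> hr; apply: reach_arc hr _; apply: posA.
by move: h1; rewrite lap_off ?oppr_eq0 // eq_sym.
Qed.

Lemma G2 o delta : shortest_dist A c o delta ->
  forall k, (k < delta)%N -> ~ reach k o.
Proof.
case=> _ hmin k hk [s [hs hp hl]].
move: hl; case/shortenP: hp => p' hp' hu hsub hl.
have := hmin (size p'); have : dipath A c o (size p') by exists p'.
move=> /[swap] /[apply].
have : (size p' <= size s)%N.
  by apply: uniq_leq_size => //; move: hu; rewrite cons_uniq => /andP[].
lia.
Qed.

Lemma G3 k i : (forall l, (l < k)%N -> ~ reach l i) ->
  (L^+k) i c = (-1)^+k * (A^+k) i c.
Proof.
elim: k i => [|k IH] i hnr; first by rewrite !expr0 mul1r.
rewrite !exprS -!mulmxE !mxE mulr_sumr; apply: eq_bigr => j _.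
case: (eqVneq j i) => [->|hji].
  have -> : (L^+k) i c = 0.
    apply/eqP/negP => /negP h; exact: (hnr k (ltnSn k) (G1 h)).
  by rewrite (proj2 adjA) mulr0 mul0r mulr0.
rewrite lap_off; last by rewrite eq_sym.
case: (eqVneq (A i j) 0) => [->|hA]; first by rewrite oppr0 !mul0r mulr0.
rewrite IH; first by ring.
move=> l hl hr; apply: (hnr l.+1) => //.
exact: reach_arc hr (posA hA).
Qed.

Lemma A_ge0 k i j : 0 <= (A^+k) i j.
Proof.
elim: k i j => [|k IH] i j; first by rewrite expr0 mxE; case: (i == j).
rewrite exprS -mulmxE mxE; apply: sumr_ge0 => l _.
by apply: mulr_ge0 => //; apply: (proj1 adjA).
Qed.

Lemma A_walk s : path (Defs.arc A) c s -> 0 < (A^+(size s)) (last c s) c.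
Proof.
elim/last_ind: s => [|s x IH]; first by rewrite expr0 mxE eqxx ltr01.
rewrite rcons_path => /andP[hp ha].
rewrite size_rcons last_rcons exprS -mulmxE mxE (bigD1 (last c s)) //=.
have h1 := IH hp.
have h2 : 0 < A x (last c s) by exact: ha.
have h3 : 0 <= \sum_(i | i != last c s) A x i * (A ^+ size s) i c.
  by apply: sumr_ge0 => l _; apply: mulr_ge0 => //; [apply: (proj1 adjA)|apply: A_ge0].
have h4 := mulr_gt0 h2 h1.
lra.
Qed.

End Graph.

Section Frac.
Variable R : realFieldType.
Local Notation tf := (@FracField.tofrac {poly R}).

Lemma tf_neq0 (p : {poly R}) : p != 0 -> tf p != 0.
Proof. by rewrite tofrac_eq0. Qed.

Lemma reldeg_of (F G : {poly R}) : F != 0 -> G != 0 ->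
  relative_degree (polyF F / polyF G) ((size G)%:Z - (size F)%:Z).
Proof.
move=> F0 G0.
set g := gcdp F G.
have g0 : g != 0 by rewrite gcdp_eq0 negb_and F0.
have hF : F %/ g * g = F by apply: divpK; apply: dvdp_gcdl.
have hG : G %/ g * g = G by apply: divpK; apply: dvdp_gcdr.
have n0 : F %/ g != 0 by apply/eqP => h; move: F0; rewrite -hF h mul0r eqxx.
have d0 : G %/ g != 0 by apply/eqP => h; move: G0; rewrite -hG h mul0r eqxx.
exists (F %/ g), (G %/ g); split => //.
- by apply: coprimep_div_gcd; rewrite F0.
- rewrite -{1}hF -{1}hG /polyF !rmorphM /=.
  have := tf_neq0 g0; have := tf_neq0 d0; move: (tf g) (tf (G %/ g)) (tf (F %/ g)) => x y z hy hx.
  by rewrite invfM mulrACA mulfV // mulr1.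
- rewrite -{2}hF -{2}hG !size_mul //.
  have hs : size g = (size g).-1.+1 by rewrite prednK // size_poly_gt0.
  rewrite hs !addnS /= !PoszD; ring.
Qed.
End Frac.

Section Transfer.
Variable R : realFieldType.
Local Notation tf := (@FracField.tofrac {poly R}).

Lemma transfer_eq N (A : 'M[R]_N) (a b p q : {poly R}) (c o : 'I_N) :
  a * p != 0 -> \det (Pm (laplacian A) (a * p) (b * q)) != 0 ->
  transfer A (openloop a b p q) c o =
  polyF ((b * q) * (\adj (Pm (laplacian A) (a * p) (b * q))) o c) /
  polyF (\det (Pm (laplacian A) (a * p) (b * q))).
Proof.
set d := a * p; set n := b * q; set P := Pm _ d n.
set Q := \adj P; set G := \det P => d0 G0.
have td0 : tf d != 0 by rewrite tofrac_eq0.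
have tG0 : tf G != 0 by rewrite tofrac_eq0.
rewrite /transfer /openloop /polyF -/d -/n.
clearbody d n.
set M := tf n / tf d.
set B := 1%:M + M *: map_mx (fun x => tf x%:P) (laplacian A).
have hPB : map_mx tf P = tf d *: B.
  apply/matrixP => i j; rewrite !mxE rmorphD !rmorphM rmorph_nat /M.
  set y := tf _%:P; set x := (_ == _)%:R.
  change (x * tf d + tf n * y = tf d * (x + tf n / tf d * y)).
  move: td0; move: (tf d) (tf n) x y => D0 N0 x y hD0.
  rewrite mulrDr [x * _]mulrC; congr (_ + _).
  by rewrite mulrA [D0 * _]mulrCA mulfV // mulr1.
set W := (tf d / tf G) *: map_mx tf Q.
have hB : B = (tf d)^-1 *: map_mx tf P.
  by rewrite hPB scalerA (mulVf td0) scale1r.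
have hBW : B *m W = 1%:M.
  rewrite hB /W -scalemxAl -scalemxAr -map_mxM mul_mx_adj map_scalar_mx scalerA.
  rewrite scale_scalar_mx; congr (_%:M).
  by rewrite mulrA (mulVf td0) mul1r (mulVf tG0).
have hinv : invmx B = W.
  have [hu _] := mulmx1_unit hBW.
  by rewrite -[invmx B]mulmx1 -hBW mulmxA (mulVmx hu) mul1mx.
rewrite hinv -rowE -scalemxAr -colE !mxE /M.
have -> : tf (n * cofactor P c o) = tf n * tf (cofactor P c o) by apply: rmorphM.
move: td0 tG0; move: (tf d) (tf n) (tf G) (tf (cofactor P c o)).
move=> D0 N0 G1 C0 hD hG.
by rewrite !mulrA (divfK hD) mulrAC.
Qed.
End Transfer.

Unset Implicit Arguments.
Theorem corollary2 (R : realFieldType) (N : nat) (A : 'M[R]_N)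
  (a b p q : {poly R}) (c o : 'I_N) (delta : nat) :
  adjacency A ->
  a != 0 -> b != 0 -> p != 0 -> q != 0 ->
  (size (b * q)%R < size (a * p)%R)%N ->
  shortest_dist A c o delta ->
  relative_degree (transfer A (openloop a b p q) c o)
    ((delta.+1 * (size (a * p)%R - size (b * q)%R))%N)%:Z.
Proof.
move=> adjA a0 b0 p0 q0 hsz hsd.
have d0 : a * p != 0 by rewrite mulf_neq0.
have n0 : b * q != 0 by rewrite mulf_neq0.
have Lz : forall k, (k < delta)%N -> (laplacian A ^+ k) o c = 0.
  move=> k hk; apply/eqP/negPn/negP => h.
  exact (G2 hsd hk (G1 adjA h)).
have Lnz : (laplacian A ^+ delta) o c != 0.
  have [[s [hs hp hl _]] _] := hsd.
  have hpos := A_walk adjA hp; rewrite hs hl in hpos.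
  rewrite (G3 adjA).
    by rewrite mulf_neq0 ?signr_eq0 // gt_eqF.
  move=> l hl'; exact (G2 hsd hl').
have [Q0 hkey] := key n0 hsz Lz Lnz.
have hdet := size_detP (laplacian A) n0 hsz.
have G0 : \det (Pm (laplacian A) (a * p) (b * q)) != 0.
  by rewrite -size_poly_gt0 hdet.
rewrite transfer_eq //.
set Q := (\adj _) o c in Q0 hkey *.
set G := \det _ in G0 hdet *.
suff -> : ((delta.+1 * (size (a * p)%R - size (b * q)%R))%N)%:Z =
   (size G)%:Z - (size ((b * q) * Q)%R)%:Z.
  by apply: reldeg_of => //; rewrite mulf_neq0.
rewrite (size_mul n0 Q0) hdet.
have hn : (0 < size (b * q)%R)%N by rewrite size_poly_gt0.
move: hkey hsz hn.
move: (size (a * p)%R) (size (b * q)%R) (size Q) => sd sn sQ hk hs hn.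
have [D hD] : exists D, sd = D.+1 by exists sd.-1; lia.
have [E hE] : exists E, sn = E.+1 by exists sn.-1; lia.
subst sd sn; rewrite /= subSS mulnBr mulSn in hk *.
rewrite mulSn.
have hED : (E <= D)%N by lia.
have : (delta * E <= delta * D)%N by rewrite leq_mul2l hED orbT.
move: hk; set y := (N * D)%N; set z := (delta * E)%N; set x := (delta * D)%N.
lia.
Qed.
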